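(* Let $0<\mu<L$, $\kappa=L/\mu$, and let $m(z)=z^n+\sum_{i=0}^{n-1}m_iz^i\in\mathbb{R}[z]$ be monic of degree $n\ge1$ with all roots on the unit circle. Let $d(z)\in\mathbb{R}[z]$ with $\deg d<n$, and let $\rho\in(0,1)$ be such that for every $\lambda\in[\mu,L]$, all roots of $p_\lambda(z)=m(z)-\lambda d(z)$ lie in the closed disk $\{z:|z|\le\rho\}$. Then $$\rho\ \ge\ \rho_{\mathrm{TV}}:=\Bigl(\frac{\kappa-1}{\kappa+1}\Bigr)^{1/n}.$$ Equivalently, the worst-case convergence rate (over all symmetric $A$ with eigenvalues in $[\mu,L]$ and all $b$ with model $m$) of any minimal-order optimization filter $C(z)=\frac{d(z)}{m(z)}I_d$ that asymptotically tracks the minimizer is at least $\rho_{\mathrm{TV}}$.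
   Context: Setting: objective $f_k(x)=\tfrac12x^\top Ax+b_k^\top x$, iterates with $\mathcal{Z}$-transform $X(z)=C(z)(AX(z)+B(z))$, where $B(z)=B_N(z)/m(z)$ is the $\mathcal{Z}$-transform of $\{b_k\}$; convergence rate is $\limsup_k\|x_k-x_k^\star\|^{1/k}$ with $x_k^\star=-A^{-1}b_k$. For the filter $C(z)=\frac{d(z)}{m(z)}I_d$, the closed-loop poles are the roots of $m(z)-\lambda d(z)$ for $\lambda$ ranging over the eigenvalues of $A$. *)

(* Defs.v *)
From mathcomp Require Import all_boot all_order all_algebra.
From mathcomp Require Import all_classical all_reals all_analysis.
From mathcomp Require Export complex.

(* Main.v *)
Require Import Defs.
From mathcomp Require Import all_boot all_order all_algebra.
From mathcomp Require Import all_classical all_reals all_analysis.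
From mathcomp Require Import complex.
From mathcomp Require Import ring lra.
Import Order.TTheory GRing.Theory Num.Theory.
Local Open Scope ring_scope.
Local Open Scope complex_scope.

Lemma norm_rc (R : rcfType) (x : R) : `|x%:C| = `|x|%:C.
Proof. by rewrite normc_def /= expr0n /= addr0 sqrtr_sqr. Qed.

Lemma monic_prod_roots (R : rcfType) (pc : {poly R[i]}) : pc \is monic ->
  exists r : seq R[i], [/\ size r = (size pc).-1,
    (forall z, z \in r -> root pc z) & `|pc.[0]| = \prod_(z <- r) `|z| ].
Proof.
move=> mon; have [r Hr] := closed_field_poly_normal pc.
move: Hr; rewrite (monicP mon) scale1r => Hr.
exists r; split.
- by rewrite Hr size_prod_XsubC.
- by move=> z zr; rewrite Hr root_prod_XsubC.
- rewrite Hr horner_prod normr_prod; apply: eq_bigr => z _.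
  by rewrite hornerXsubC sub0r normrN.
Qed.

Lemma pert_facts (R : rcfType) (n : nat) (m d : {poly R}) (lam : R) :
  size m = n.+1 -> m \is monic -> (size d <= n)%N ->
  size (m - lam *: d) = n.+1 /\ (m - lam *: d) \is monic.
Proof.
move=> sm mon sd.
have lt : (size (- (lam *: d)) < size m)%N.
  by rewrite size_polyN sm ltnS (leq_trans (size_scale_leq _ _)).
split; first by rewrite size_polyDl // sm.
by rewrite monicE lead_coefDl // (monicP mon).
Qed.

Lemma abs0_bound (R : rcfType) (n : nat) (q : {poly R}) (B : R) :
  0 <= B -> size q = n.+1 -> q \is monic ->
  (forall z : R[i], root (map_poly (real_complex R) q) z -> `|z| <= B%:C) ->
  `|q.[0]| <= B ^+ n.
Proof.
move=> B0 sq mq H.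
have [r [sr rr nr]] := monic_prod_roots _ (map_poly (real_complex R) q)
  ltac:(by rewrite map_monic).
move: nr; rewrite -(rmorph0 (real_complex R)) horner_map norm_rc => nr.
rewrite size_map_poly sq /= in sr.
rewrite -lecR; have -> : (B ^+ n)%:C = \prod_(z <- r) B%:C.
  rewrite rmorphXn -sr; elim: (r) => [|a s IH]; first by rewrite big_nil expr0.
  by rewrite big_cons exprS IH.
rewrite nr.
rewrite [X in X <= _]big_seq [X in _ <= X]big_seq.
apply: ler_prod => z zr; rewrite normr_ge0 /=.
by apply: H; apply: rr.
Qed.

Lemma abs0_unit (R : rcfType) (q : {poly R}) : q \is monic ->
  (forall z : R[i], root (map_poly (real_complex R) q) z -> `|z| = 1) ->
  `|q.[0]| = 1.
Proof.
move=> mq H.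
have [r [_ rr nr]] := monic_prod_roots _ (map_poly (real_complex R) q)
  ltac:(by rewrite map_monic).
move: nr; rewrite -(rmorph0 (real_complex R)) horner_map norm_rc => nr.
apply: (@complexI R); rewrite nr /= big_seq big1 // => z zr.
exact/H/rr.
Qed.

Theorem theorem1 (R : realType) (mu L rho : R) (n : nat) (m d : {poly R}) :
  0 < mu -> mu < L ->
  (0 < n)%N -> size m = n.+1 -> m \is monic ->
  (forall z : R[i], root (map_poly (real_complex R) m) z -> `|z| = 1) ->
  (size d <= n)%N ->
  0 < rho < 1 ->
  (forall lam : R, mu <= lam <= L ->
     forall z : R[i], root (map_poly (real_complex R) (m - lam *: d)) z ->
       `|z| <= (rho%:C)) ->
  ((L / mu - 1) / (L / mu + 1)) `^ (n%:R^-1) <= rho.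
Proof.
move=> mu0 muL n0 sm mm Hm sd /andP[r0 r1] Hl.
have m0 := abs0_unit _ _ mm Hm.
have bd lam : mu <= lam <= L -> `|(m - lam *: d).[0]| <= rho ^+ n.
  move=> hl; have [s1 s2] := pert_facts _ _ _ _ lam sm mm sd.
  by apply: abs0_bound => //; [exact: ltW | exact: Hl].
have b1 := bd mu ltac:(by rewrite lexx ltW).
have b2 := bd L ltac:(by rewrite lexx ltW).
move: b1 b2; rewrite !hornerE.
set a := m.[0]; set b := d.[0]; set r := rho ^+ n => b1 b2.
have r0' : 0 <= r by rewrite exprn_ge0 // ltW.
have key : (L - mu) <= (L + mu) * r.
  have : `|(L - mu) * a| <= (L + mu) * r.
    have -> : (L - mu) * a = L * (a - mu * b) - mu * (a - L * b) by ring.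
    apply: (le_trans (ler_normB _ _)).
    rewrite !normrM (gtr0_norm mu0) (gtr0_norm (lt_trans mu0 muL)) mulrDl.
    by apply: lerD; apply: ler_wpM2l => //; rewrite ltW // (lt_trans mu0 muL).
  by rewrite normrM m0 mulr1 gtr0_norm // subr_gt0.
have xe : (L / mu - 1) / (L / mu + 1) = (L - mu) / (L + mu).
  by field; rewrite ?gt_eqF // ?addr_gt0 ?divr_gt0 // (lt_trans mu0 muL).
rewrite xe.
have Lmu : 0 < L + mu by rewrite addr_gt0 // (lt_trans mu0 muL).
have xr : (L - mu) / (L + mu) <= r by rewrite ler_pdivrMr // mulrC.
have x0 : 0 <= (L - mu) / (L + mu) by rewrite divr_ge0 // ltW // subr_gt0.
apply: (le_trans (ge0_ler_powR _ _ _ xr)) => //.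
rewrite /r -powR_mulrn; last exact: ltW.
rewrite -powRrM mulfV ?pnatr_eq0 -?lt0n // powRr1 //; exact: ltW.
Qed.
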